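(* For $k\ge 1$, rectangular reduction gives a bijection $\mathrm{red}:\mathcal M^{\circ}_{2k}\to\mathcal N_{k,0}\cup\mathcal N_{k,1}$. Consequently $M^\circ_{2k} = N_{k,0}+N_{k,1} = N_k - N_{k,2}$.
   Context: Colorings. Each square is colored water or land. Two distinct squares are adjacent if they share an edge after all edge identifications; a set of squares is connected if its induced adjacency graph is connected (empty set counts as connected). (N1): the water is connected. (N2$\circ$): no interior (non-boundary) vertex of the tiling has all of the squares incident to it water. A $2\times k$ Nurikabe rectangle is a coloring of the $2\times k$ grid (columns $1,\dots,k$ left to right, no identifications) with connected water and no $2\times 2$ block of water squares; $\mathcal N_k$ is the set of these, $N_k=|\mathcal N_k|$; $\mathcal N_{k,i}$ is the subset with exactly $i$ water squares in column $k$, $N_{k,i}=|\mathcal N_{k,i}|$. Tile $[0,n]\times[0,1]$ by unit squares $[j-1,j]\times[0,1]$, called square $j$. The $1\times n$ Möbius strip identifies $(x,1)\sim(n-x,0)$ for $x\in[0,n]$; its boundary is the image of the vertical sides. $\mathcal M^\circ_n$ is the set of colorings of the $1\times n$ Möbius strip satisfying (N1) and (N2$\circ$), $M^\circ_n=|\mathcal M^\circ_n|$. Rectangular reduction: for a coloring of the $1\times 2k$ Möbius strip, $\mathrm{red}$ gives the coloring of the $2\times k$ grid whose column $j$ ($1\le j\le k$) has top square colored as square $j$ and bottom square colored as square $2k+1-j$. *)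

(* Defs.v *)
From mathcomp Require Import all_boot.
Set Implicit Arguments. Unset Strict Implicit. Unset Printing Implicit Defensive.

(* Colorings: true = water, false = land. *)

Definition connected_in (T : finType) (e : rel T) (A : {set T}) : bool :=
  [forall x in A, forall y in A,
     connect [rel u v | [&& u \in A, v \in A & e u v]] x y].

Definition water (T : finType) (f : {ffun T -> bool}) : {set T} := [set x | f x].

(* Square j (1-based, [j-1,j]x[0,1]) is represented by s : 'I_n with val s = j-1,
   so square s occupies [s, s+1] x [0,1]. *)

(* Edge adjacency: distinct squares sharing an edge after identification.
   - the vertical edge {s+1} x [0,1] is shared by squares s and s+1;
   - the top edge [s,s+1] x {1} of square s is identified, via
     (x,1) ~ (n-x,0), with [n-s-1, n-s] x {0}, the bottom edge of square
     n-1-s; i.e. squares s, t with s + t = n - 1.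
   (The vertical sides x = 0, x = n form the boundary.) *)
Definition mob_adj (n : nat) : rel 'I_n :=
  fun s t => (s != t) && [|| s.+1 == t, t.+1 == s | (s + t == n.-1)].

(* Vertices of the tiling: points (j, y) with 0 <= j <= n, y in {0,1}
   (y = true means height 1), modulo (j,1) ~ (n-j,0). *)
Definition mob_pt_equiv (n : nat) (p q : 'I_n.+1 * bool) : bool :=
  (p == q) || ((p.1 + q.1 == n) && (p.2 != q.2)).

Definition sq_corner (n : nat) (s : 'I_n) (p : 'I_n.+1 * bool) : bool :=
  (val p.1 == val s) || (val p.1 == (val s).+1).

Definition mob_incident (n : nat) (s : 'I_n) (p : 'I_n.+1 * bool) : bool :=
  [exists q, mob_pt_equiv q p && sq_corner s q].

Definition mob_interior (n : nat) (p : 'I_n.+1 * bool) : bool :=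
  [forall q, mob_pt_equiv q p ==> (0 < val q.1 < n)].

Definition mob_N1 (n : nat) (f : {ffun 'I_n -> bool}) : bool :=
  connected_in (@mob_adj n) (water f).

Definition mob_N2o (n : nat) (f : {ffun 'I_n -> bool}) : bool :=
  [forall p, mob_interior p ==> ~~ [forall s, mob_incident s p ==> f s]].

Definition Mo (n : nat) : {set {ffun 'I_n -> bool}} :=
  [set f | mob_N1 f && mob_N2o f].

(* square (c, r): column c : 'I_k (0-based, column c+1 of the paper),
   row r : bool with true = top, false = bottom. *)
Definition grid_adj (k : nat) : rel ('I_k * bool) :=
  fun p q => ((p.1 == q.1) && (p.2 != q.2))
          || ((p.2 == q.2) && (((val p.1).+1 == val q.1) || ((val q.1).+1 == val p.1))).

Definition no_water_block (k : nat) (f : {ffun 'I_k * bool -> bool}) : bool :=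
  [forall c1 : 'I_k, forall c2 : 'I_k, ((val c1).+1 == val c2) ==>
     ~~ [&& f (c1, true), f (c1, false), f (c2, true) & f (c2, false)]].

Definition nurikabe_rect (k : nat) (f : {ffun 'I_k * bool -> bool}) : bool :=
  connected_in (@grid_adj k) (water f) && no_water_block f.

Definition Nrect (k : nat) : {set {ffun 'I_k * bool -> bool}} :=
  [set f | nurikabe_rect f].

Definition col_water (k : nat) (f : {ffun 'I_k * bool -> bool}) (c : 'I_k) : nat :=
  f (c, true) + f (c, false).

Definition Nrect_i (k i : nat) : {set {ffun 'I_k * bool -> bool}} :=
  [set f in Nrect k | [forall c : 'I_k, (val c == k.-1) ==> (col_water f c == i)]].

Definition at_nat (n : nat) (g : {ffun 'I_n -> bool}) (i : nat) : bool :=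
  if @insub nat (fun m => m < n) _ i is Some o then g o else false.

(* column c (0-based): top = square c+1, bottom = square 2k+1-(c+1) (1-based),
   i.e. 0-based indices c and 2k-1-c. *)
Definition red (k : nat) (g : {ffun 'I_(k.*2) -> bool}) : {ffun 'I_k * bool -> bool} :=
  [ffun p : 'I_k * bool =>
     at_nat g (if p.2 then val p.1 else k.*2 - 1 - val p.1)].

(* Main.v *)
Require Import Defs.
From mathcomp Require Import all_boot.
From mathcomp Require Import zify.

Set Implicit Arguments. Unset Strict Implicit. Unset Printing Implicit Defensive.

Lemma at_natE n (g : {ffun 'I_n -> bool}) (s : 'I_n) : at_nat g (val s) = g s.
Proof.
rewrite /at_nat; case: insubP => [o _ ho|]; last by rewrite ltn_ord.
by congr (g _); apply: val_inj.
Qed.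

Lemma at_nat_out n (g : {ffun 'I_n -> bool}) i : n <= i -> at_nat g i = false.
Proof.
move=> hi; rewrite /at_nat; case: insubP => [o ho _|] //; lia.
Qed.

Section Iso.
Variable k : nat.

Lemma phi_proof (p : 'I_k * bool) :
  (if p.2 then val p.1 else k.*2 - 1 - val p.1) < k.*2.
Proof. case: p => [c b]; have := ltn_ord c; case: b => /=; lia. Qed.

Definition phi (p : 'I_k * bool) : 'I_(k.*2) := Ordinal (phi_proof p).

Lemma psi_proof (s : 'I_(k.*2)) : (if val s < k then val s else k.*2 - 1 - val s) < k.
Proof. have := ltn_ord s; case: ifP; lia. Qed.

Definition psi (s : 'I_(k.*2)) : 'I_k * bool := (Ordinal (psi_proof s), val s < k).

Lemma phiK : cancel phi psi.
Proof.
case=> c b; have hc := ltn_ord c; rewrite /psi /phi /=.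
congr pair; first (apply: val_inj => /=; case: b => /=; case: ifP; lia).
case: b => /=; lia.
Qed.

Lemma psiK : cancel psi phi.
Proof.
move=> s; have hs := ltn_ord s; apply: val_inj; rewrite /psi /phi /=.
case: ltnP => /= h; lia.
Qed.

Lemma red_phi (g : {ffun 'I_(k.*2) -> bool}) p : red g p = g (phi p).
Proof. by rewrite ffunE; exact: (at_natE g (phi p)). Qed.

Definition unred (f : {ffun 'I_k * bool -> bool}) : {ffun 'I_(k.*2) -> bool} :=
  [ffun s => f (psi s)].

Lemma redK : cancel (@red k) unred.
Proof. by move=> g; apply/ffunP => s; rewrite ffunE red_phi psiK. Qed.

Lemma unredK : cancel unred (@red k).
Proof. by move=> f; apply/ffunP => p; rewrite red_phi ffunE phiK. Qed.

Lemma adj_phi p q : mob_adj (phi p) (phi q) = grid_adj p q.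
Proof.
case: p q => [c b] [d b']; have hc := ltn_ord c; have hd := ltn_ord d.
rewrite /mob_adj /grid_adj /= -val_eqE /= -(val_eqE c d).
by case: b; case: b' => /=; lia.
Qed.

End Iso.

Lemma conn_iso (T U : finType) (e : rel T) (e' : rel U) (h : T -> U) (h' : U -> T)
  (hK : cancel h h') (h'K : cancel h' h) (he : forall x y, e' (h x) (h y) = e x y)
  (f : {ffun U -> bool}) :
  connected_in e' (water f) = connected_in e (water [ffun x => f (h x)]).
Proof.
set R' := [rel u v | [&& u \in water f, v \in water f & e' u v]].
set R := [rel u v | [&& u \in water [ffun x => f (h x)], v \in water [ffun x => f (h x)] & e u v]].
have RR : forall x y, R' (h x) (h y) = R x y.
  by move=> x y; rewrite /= !inE !ffunE he.
have CC : forall x y, connect R' (h x) (h y) = connect R x y.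
  move=> x y; apply/idP/idP.
    case/connectP => p pp ey.
    apply/connectP; exists (map h' p).
      rewrite -{1}(hK x); apply: homo_path pp => u v huv.
      by move: huv; rewrite /= !inE !ffunE -he !h'K.
    by rewrite -[x in last x _](hK x) last_map -ey hK.
  case/connectP => p pp ->; apply/connectP; exists (map h p).
    by apply: homo_path pp => u v; rewrite /= !inE !ffunE he.
  by rewrite last_map.
have W : forall x, (x \in water [ffun x => f (h x)]) = (h x \in water f).
  by move=> x; rewrite !inE ffunE.
rewrite /connected_in; apply/idP/idP.
  move/forallP => H; apply/forallP => x; apply/implyP => hx.
  apply/forallP => y; apply/implyP => hy; rewrite -/R -CC.
  rewrite W in hx; rewrite W in hy.
  by move: (H (h x)) => /implyP /(_ hx) /forallP /(_ (h y)) /implyP /(_ hy).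
move/forallP => H; apply/forallP => u; apply/implyP => hu.
apply/forallP => v; apply/implyP => hv; rewrite -/R' -(h'K u) -(h'K v) CC.
rewrite -(h'K u) -W in hu; rewrite -(h'K v) -W in hv.
by move: (H (h' u)) => /implyP /(_ hu) /forallP /(_ (h' v)) /implyP /(_ hv).
Qed.

Lemma N2oP n (g : {ffun 'I_n -> bool}) :
  reflect (forall j, 0 < j < n ->
             ~~ [&& at_nat g j.-1, at_nat g j, at_nat g (n - j).-1 & at_nat g (n - j)])
          (mob_N2o g).
Proof.
apply: (iffP forallP) => H.
- move=> j /andP[j0 jn]; have jn1 : j < n.+1 by lia.
  move: (H (Ordinal jn1, true)) => /implyP.
  have int : mob_interior (Ordinal jn1, true).
    apply/forallP => q; apply/implyP; rewrite /mob_pt_equiv.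
    case/orP => [/eqP -> /=|/andP [/eqP /= e _]]; lia.
  move=> /(_ int); apply: contra => /and4P [a b c d].
  apply/forallP => s; apply/implyP => /existsP [q /andP [hq hc]].
  rewrite -at_natE.
  have : val s = j.-1 \/ val s = j \/ val s = (n-j).-1 \/ val s = n - j.
    move: hq hc; rewrite /mob_pt_equiv /sq_corner.
    case/orP => [/eqP -> /=|/andP[/eqP /= e _]] /orP[/eqP e2|/eqP e2]; lia.
  by case=> [->|[->|[->|->]]].
- case=> [pj py]; apply/implyP => hint; apply/negP => hall.
  have [j0 jn] : 0 < val pj /\ val pj < n.
    by move/forallP: hint => /(_ (pj, py)); rewrite /mob_pt_equiv eqxx /= => /andP[].
  have key : forall i (hi : i < n), (forall s : 'I_n, val s = i -> mob_incident s (pj, py)) ->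
      at_nat g i.
    move=> i hi hs; rewrite -[i]/(val (Ordinal hi)) at_natE.
    by move/forallP: hall => /(_ (Ordinal hi)) /implyP; apply; exact: hs.
  have vj : val pj = nat_of_ord pj by [].
  have hq : n - val pj < n.+1 by lia.
  have e1 : mob_pt_equiv (pj, py) (pj, py) by rewrite /mob_pt_equiv eqxx.
  have e2 : mob_pt_equiv (Ordinal hq, ~~ py) (pj, py).
    rewrite /mob_pt_equiv; apply/orP; right; apply/andP; split; first by rewrite /=; lia.
    by move: (py); case.
  have h1 : (val pj).-1 < n by lia.
  have h2 : val pj < n by lia.
  have h3 : (n - val pj).-1 < n by lia.
  have h4 : n - val pj < n by lia.
  have k1 := @key ((val pj).-1) h1 (fun s hs => ltac:(have vs : val s = nat_of_ord s by []; apply/existsP; exists (pj, py); rewrite e1 /sq_corner /=; lia)).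
  have k2 := @key (val pj) h2 (fun s hs => ltac:(have vs : val s = nat_of_ord s by []; apply/existsP; exists (pj, py); rewrite e1 /sq_corner /=; lia)).
  have k3 := @key ((n - val pj).-1) h3 (fun s hs => ltac:(have vs : val s = nat_of_ord s by []; apply/existsP; exists (Ordinal hq, ~~ py); rewrite e2 /sq_corner /=; lia)).
  have k4 := @key (n - val pj) h4 (fun s hs => ltac:(have vs : val s = nat_of_ord s by []; apply/existsP; exists (Ordinal hq, ~~ py); rewrite e2 /sq_corner /=; lia)).
  have h0 : 0 < val pj < n by lia.
  by move: (H _ h0); rewrite k1 k2 k3 k4.
Qed.

Lemma comb (G : nat -> bool) k : 0 < k ->
  (forall j, 0 < j < k.*2 -> ~~ [&& G j.-1, G j, G (k.*2 - j).-1 & G (k.*2 - j)]) <->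
  ((forall c, c.+1 < k -> ~~ [&& G c, G (k.*2 - 1 - c), G c.+1 & G (k.*2 - 1 - c.+1)])
   /\ ~~ (G k.-1 && G (k.*2 - 1 - k.-1))).
Proof.
move=> hk; split.
  move=> H; split.
    move=> c hc; have hj : 0 < c.+1 < k.*2 by lia.
    move: (H _ hj).
    have -> : (k.*2 - c.+1).-1 = k.*2 - 1 - c.+1 by lia.
    have -> : k.*2 - c.+1 = k.*2 - 1 - c by lia.
    rewrite /=; apply: contra => /and4P [a b c' d]; by rewrite a b c' d.
  have hj : 0 < k < k.*2 by lia.
  move: (H _ hj).
  have -> : (k.*2 - k) = k by lia.
  have -> : k.*2 - 1 - k.-1 = k by lia.
  apply: contra => /andP [a b]; by rewrite a b.
case=> H1 H2 j hj.
case: (ltngtP j k) => hjk.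
- have hc : (j.-1).+1 < k by lia.
  move: (H1 _ hc).
  have -> : (j.-1).+1 = j by lia.
  have -> : k.*2 - 1 - j.-1 = k.*2 - j by lia.
  have -> : k.*2 - 1 - j = (k.*2 - j).-1 by lia.
  apply: contra => /and4P [a b c' d]; by rewrite a b c' d.
- have hc : ((k.*2 - j).-1).+1 < k by lia.
  move: (H1 _ hc).
  have -> : ((k.*2 - j).-1).+1 = k.*2 - j by lia.
  have -> : k.*2 - 1 - (k.*2 - j).-1 = j by lia.
  have -> : k.*2 - 1 - (k.*2 - j) = j.-1 by lia.
  apply: contra => /and4P [a b c' d]; by rewrite a b c' d.
- subst j; move: H2.
  have -> : (k.*2 - k) = k by lia.
  have -> : k.*2 - 1 - k.-1 = k by lia.
  apply: contra => /and4P [a b c' d]; by rewrite a b.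
Qed.

Lemma nwbP k (g : {ffun 'I_(k.*2) -> bool}) :
  reflect (forall c, c.+1 < k -> ~~ [&& at_nat g c, at_nat g (k.*2 - 1 - c),
                                     at_nat g c.+1 & at_nat g (k.*2 - 1 - c.+1)])
          (no_water_block (red g)).
Proof.
apply: (iffP forallP) => H.
  move=> c hc; have hc0 : c < k by lia.
  move/forallP: (H (Ordinal hc0)) => /(_ (Ordinal hc)) /implyP /(_ (eqxx _)).
  by rewrite !ffunE.
move=> c1; apply/forallP => c2; apply/implyP => /eqP e.
rewrite !ffunE /= -e; apply: H; rewrite e; exact: ltn_ord.
Qed.

Section Main.
Variables (k : nat) (hk : 0 < k).

Lemma lcP : k.-1 < k. Proof. lia. Qed.
Definition lc : 'I_k := Ordinal lcP.

Lemma lastcolE (f : {ffun 'I_k * bool -> bool}) i :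
  [forall c : 'I_k, (val c == k.-1) ==> (col_water f c == i)] = (col_water f lc == i).
Proof.
apply/forallP/idP => [H|H c]; first exact: (implyP (H lc)) (eqxx _).
apply/implyP => /eqP e; have -> // : c = lc by apply: val_inj.
Qed.

Lemma key_equiv (g : {ffun 'I_(k.*2) -> bool}) :
  (g \in Mo k.*2) = (red g \in Nrect_i k 0 :|: Nrect_i k 1).
Proof.
rewrite !inE /mob_N1 /nurikabe_rect !lastcolE.
have -> : connected_in (@mob_adj _) (water g) = connected_in (@grid_adj k) (water (red g)).
  rewrite (conn_iso (@phiK k) (@psiK k) (@adj_phi k) g); congr connected_in.
  by congr water; apply/ffunP => p; rewrite red_phi ffunE.
have -> : col_water (red g) lc = at_nat g k.-1 + at_nat g (k.*2 - 1 - k.-1).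
  by rewrite /col_water !ffunE.
have -> : mob_N2o g = no_water_block (red g) && ~~ (at_nat g k.-1 && at_nat g (k.*2 - 1 - k.-1)).
  apply/N2oP/andP.
    by move/(comb _ hk) => [/nwbP H1 H2].
  by case=> /nwbP H1 H2; apply/(comb _ hk).
case: (connected_in _ _); case: (no_water_block _); case: (at_nat g k.-1);
  by case: (at_nat g _).
Qed.

Lemma cw_le2 (f : {ffun 'I_k * bool -> bool}) : col_water f lc <= 2.
Proof. by rewrite /col_water; case: (f _); case: (f _). Qed.

End Main.

Theorem lemma5p1 (k : nat) (hk : 1 <= k) :
  [/\ {in Mo k.*2, forall g, red g \in Nrect_i k 0 :|: Nrect_i k 1},
      {in Mo k.*2 &, injective (@red k)},
      (forall f, f \in Nrect_i k 0 :|: Nrect_i k 1 ->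
         exists2 g, g \in Mo k.*2 & red g = f),
      #|Mo k.*2| = #|Nrect_i k 0| + #|Nrect_i k 1|
    & #|Mo k.*2| = #|Nrect k| - #|Nrect_i k 2|].
Proof.
have KE := key_equiv hk.
have IM : [set red g | g in Mo k.*2] = Nrect_i k 0 :|: Nrect_i k 1.
  apply/setP => f; apply/imsetP/idP => [[g hg ->]|hf]; first by rewrite -KE.
  by exists (unred f); rewrite ?KE unredK.
have CM : #|Mo k.*2| = #|Nrect_i k 0 :|: Nrect_i k 1|.
  by rewrite -IM card_imset //; exact: (can_inj (@redK k)).
have D01 : Nrect_i k 0 :&: Nrect_i k 1 = set0.
  apply/setP => f; rewrite !inE !(lastcolE hk).
  by apply/negbTE/negP => /andP[/andP[_ /eqP->] /andP[_]].
have D2 : (Nrect_i k 0 :|: Nrect_i k 1) :&: Nrect_i k 2 = set0.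
  apply/setP => f; rewrite !inE !(lastcolE hk).
  by apply/negbTE/negP => /andP[/orP[/andP[_ /eqP->]|/andP[_ /eqP->]] /andP[_]].
have U : Nrect k = (Nrect_i k 0 :|: Nrect_i k 1) :|: Nrect_i k 2.
  apply/setP => f; rewrite !inE !(lastcolE hk).
  case: (nurikabe_rect f) => //=; have := cw_le2 hk f.
  by case: (col_water f _) => [|[|[|]]].
split.
- by move=> g; rewrite KE.
- by move=> g1 g2 _ _; exact: (can_inj (@redK k)).
- by move=> f hf; exists (unred f); rewrite ?KE unredK.
- by rewrite CM cardsU D01 cards0 subn0.
- by rewrite U cardsU D2 cards0 subn0 CM addnK.
Qed.
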